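(* Consider the relative dynamics and constraint described in the context, with initial location $\mathbf{x}_0=(x_0,y_0)$, $\|\mathbf{x}_0\|>1$, $y_0\ge0$, and let $$\theta_{\tan}=\cos^{-1}\Big(\tfrac{1}{\|\mathbf{x}_0\|}\Big)+\operatorname{atan}(y_0,x_0).$$ For a target location on the Proximity Circle at angle $\theta\ge\theta_{\tan}$, the optimal (minimum-time, constraint-respecting) Evader trajectory from $\mathbf{x}_0$ to $(\cos\theta,\sin\theta)$ is to follow a straight-line trajectory to the point $(\cos\theta_{\tan},\sin\theta_{\tan})$ (the tangent point of the Proximity Circle as seen from $\mathbf{x}_0$) and then proceed along the Proximity Circle from $\theta_{\tan}$ to $\theta$.
   Context: Pursuer-fixed frame: the Evader's relative position $\mathbf{x}(t)=(x(t),y(t))\in\mathbb{R}^2$ evolves as $\dot x=\mu\cos\psi(t)-1$, $\dot y=\mu\sin\psi(t)$, $\mathbf{x}(0)=\mathbf{x}_0$, where $\mu\in(0,1)$ and $\psi(t)$ is the Evader's heading. The Proximity Circle is $\|\mathbf{x}\|=1$ and trajectories must satisfy $\|\mathbf{x}(t)\|\ge1$. A location at angle $\theta$ on the Proximity Circle means the point $(\cos\theta,\sin\theta)$. $\operatorname{atan}(a,b)$ is the two-argument arctangent (polar angle of $(b,a)$). The paper assumes throughout that $y\ge 0$. *)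

(* Defs.v *)
From Stdlib Require Import Reals.
From Coquelicot Require Import Coquelicot.
Open Scope R_scope.

(* Two-argument arctangent: atan2 a b = polar angle of (b, a), in (-PI, PI]. *)
Definition atan2 (a b : R) : R :=
  if Rlt_dec 0 b then atan (a / b)
  else if Rlt_dec b 0 then
         (if Rle_dec 0 a then atan (a / b) + PI else atan (a / b) - PI)
  else if Rlt_dec 0 a then PI / 2
  else if Rlt_dec a 0 then - (PI / 2)
  else 0.

Definition rnorm (x y : R) : R := sqrt (x ^ 2 + y ^ 2).

Definition theta_tan (x0 y0 : R) : R := acos (1 / rnorm x0 y0) + atan2 y0 x0.

(* Relative trajectory generated by the heading psi (integral / Caratheodory
   form of  x' = mu cos psi - 1,  y' = mu sin psi,  x(0) = (x0, y0)). *)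
Definition traj_x (mu x0 : R) (psi : R -> R) (t : R) : R :=
  x0 + RInt (fun s => mu * cos (psi s) - 1) 0 t.
Definition traj_y (mu y0 : R) (psi : R -> R) (t : R) : R :=
  y0 + RInt (fun s => mu * sin (psi s)) 0 t.

Definition admissible (mu x0 y0 : R) (psi : R -> R) (T : R) : Prop :=
  0 <= T /\
  ex_RInt (fun s => mu * cos (psi s) - 1) 0 T /\
  ex_RInt (fun s => mu * sin (psi s)) 0 T /\
  (forall t, 0 <= t <= T ->
     1 <= rnorm (traj_x mu x0 psi t) (traj_y mu y0 psi t)).

Definition reaches (mu x0 y0 : R) (psi : R -> R) (T theta : R) : Prop :=
  traj_x mu x0 psi T = cos theta /\ traj_y mu y0 psi T = sin theta.

Definition tangent_then_arc (mu x0 y0 : R) (psi : R -> R) (T th_t theta : R) : Prop :=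
  exists t1, 0 <= t1 <= T /\
    (forall t, 0 <= t <= t1 -> exists s, 0 <= s <= 1 /\
        traj_x mu x0 psi t = x0 + s * (cos th_t - x0) /\
        traj_y mu y0 psi t = y0 + s * (sin th_t - y0)) /\
    traj_x mu x0 psi t1 = cos th_t /\ traj_y mu y0 psi t1 = sin th_t /\
    exists phi : R -> R,
      phi t1 = th_t /\ phi T = theta /\
      (forall t u, t1 <= t -> t <= u -> u <= T -> phi t <= phi u) /\
      (forall t, t1 <= t <= T ->
         traj_x mu x0 psi t = cos (phi t) /\ traj_y mu y0 psi t = sin (phi t)).

(* Main.v *)
Require Import Defs.
From Stdlib Require Import Reals Lra Lia Psatz.
From Coquelicot Require Import Coquelicot.
Open Scope R_scope.

Lemma exC1 (f : R -> R) a b c : a <= b <= c -> ex_RInt f a c -> ex_RInt f a b.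
Proof. intros H H0; exact (ex_RInt_Chasles_1 (V:=R_CompleteNormedModule) f a b c H H0). Qed.
Lemma exC2 (f : R -> R) a b c : a <= b <= c -> ex_RInt f a c -> ex_RInt f b c.
Proof. intros H H0; exact (ex_RInt_Chasles_2 (V:=R_CompleteNormedModule) f a b c H H0). Qed.
Lemma exCh (f : R -> R) a b c : ex_RInt f a b -> ex_RInt f b c -> ex_RInt f a c.
Proof. intros H H0; exact (ex_RInt_Chasles (V:=R_NormedModule) f a b c H H0). Qed.
Lemma exR_plus (f g : R -> R) a b : ex_RInt f a b -> ex_RInt g a b -> ex_RInt (fun x => f x + g x) a b.
Proof. intros H H0; exact (ex_RInt_plus (V:=R_NormedModule) f g a b H H0). Qed.
Lemma exR_minus (f g : R -> R) a b : ex_RInt f a b -> ex_RInt g a b -> ex_RInt (fun x => f x - g x) a b.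
Proof. intros H H0; exact (ex_RInt_minus (V:=R_NormedModule) f g a b H H0). Qed.
Lemma exR_scal (f : R -> R) a b k : ex_RInt f a b -> ex_RInt (fun x => k * f x) a b.
Proof. intros H; exact (ex_RInt_scal (V:=R_NormedModule) f a b k H). Qed.
Lemma exR_const a b (c : R) : ex_RInt (fun _ => c) a b.
Proof. exact (ex_RInt_const (V:=R_NormedModule) a b c). Qed.
Lemma exR_ext (f g : R -> R) a b : (forall x, Rmin a b < x < Rmax a b -> f x = g x) -> ex_RInt f a b -> ex_RInt g a b.
Proof. intros H H0; exact (ex_RInt_ext (V:=R_NormedModule) f g a b H H0). Qed.
Lemma exR_cont (f : R -> R) a b : (forall z, Rmin a b <= z <= Rmax a b -> continuous f z) -> ex_RInt f a b.
Proof. intros H; exact (ex_RInt_continuous (V:=R_CompleteNormedModule) f a b H). Qed.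
Lemma R_plus (f g : R -> R) a b : ex_RInt f a b -> ex_RInt g a b -> @eq R (RInt (fun x => f x + g x) a b) (RInt f a b + RInt g a b).
Proof. intros H H0; exact (RInt_plus (V:=R_CompleteNormedModule) f g a b H H0). Qed.
Lemma R_minus (f g : R -> R) a b : ex_RInt f a b -> ex_RInt g a b -> @eq R (RInt (fun x => f x - g x) a b) (RInt f a b - RInt g a b).
Proof. intros H H0; exact (RInt_minus (V:=R_CompleteNormedModule) f g a b H H0). Qed.
Lemma R_scal (f : R -> R) a b k : ex_RInt f a b -> @eq R (RInt (fun x => k * f x) a b) (k * RInt f a b).
Proof. intros H; exact (RInt_scal (V:=R_CompleteNormedModule) f a b k H). Qed.
Lemma R_const a b (c : R) : @eq R (RInt (fun _ => c) a b) ((b - a) * c).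
Proof. exact (RInt_const (V:=R_CompleteNormedModule) a b c). Qed.
Lemma R_ext (f g : R -> R) a b : (forall x, Rmin a b < x < Rmax a b -> f x = g x) -> @eq R (RInt f a b) (RInt g a b).
Proof. intros H; exact (RInt_ext (V:=R_CompleteNormedModule) f g a b H). Qed.
Lemma R_split (f : R -> R) a b c : a <= b <= c -> ex_RInt f a c ->
  @eq R (RInt f a c) (RInt f a b + RInt f b c).
Proof.
  intros Hb Hf.
  rewrite <- (RInt_Chasles (V:=R_CompleteNormedModule) f a b c).
  - reflexivity.
  - eapply exC1; eauto.
  - eapply exC2; eauto.
Qed.
Lemma R_Chasles (f : R -> R) a b c : ex_RInt f a b -> ex_RInt f b c ->
  @eq R (RInt f a b + RInt f b c) (RInt f a c).
Proof. intros H H0; exact (RInt_Chasles (V:=R_CompleteNormedModule) f a b c H H0). Qed.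
Lemma R_unique (f : R -> R) a b l : is_RInt f a b l -> @eq R (RInt f a b) l.
Proof. intros H; exact (is_RInt_unique (V:=R_CompleteNormedModule) f a b l H). Qed.
Lemma R_derive (f df : R -> R) a b :
  (forall x, Rmin a b <= x <= Rmax a b -> is_derive f x (df x)) ->
  (forall x, Rmin a b <= x <= Rmax a b -> continuous df x) ->
  is_RInt df a b (f b - f a).
Proof. intros H H0; exact (is_RInt_derive (V:=R_CompleteNormedModule) f df a b H H0). Qed.
Lemma exR_is (f : R -> R) a b l : is_RInt f a b l -> ex_RInt f a b.
Proof. intros H; exists l; exact H. Qed.
Ltac req := match goal with |- @eq _ ?a ?b => change (@eq R a b) end.

Lemma le_sqrt_of_sq a b : 0 <= b -> a * a <= b -> a <= sqrt b.
Proof.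
  intros Hb Hab. destruct (Rle_dec a 0) as [H|H].
  - pose proof (sqrt_pos b); lra.
  - rewrite <- (sqrt_square a) by lra. apply sqrt_le_1; nra.
Qed.

Lemma CS_pt A B c s : c*c + s*s = 1 -> A * c + B * s <= sqrt (A*A + B*B).
Proof.
  intros H. apply le_sqrt_of_sq; [nra|].
  assert (0 <= (A*s - B*c)^2) by apply pow2_ge_0.
  assert (E : (A*c+B*s)*(A*c+B*s) + (A*s - B*c)^2 = (A*A+B*B)*(c*c+s*s)) by ring.
  rewrite H in E. lra.
Qed.

Lemma chord mu x0 y0 psi T t u : 0 < mu -> admissible mu x0 y0 psi T ->
  0 <= t -> t <= u -> u <= T ->
  (traj_x mu x0 psi u - traj_x mu x0 psi t + (u - t))^2
  + (traj_y mu y0 psi u - traj_y mu y0 psi t)^2 <= (mu*(u-t))^2.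
Proof.
  intros Hmu [HT [Hx [Hy _]]] Ht Htu HuT.
  set (fx := fun s => mu * cos (psi s) - 1) in *.
  set (fy := fun s => mu * sin (psi s)) in *.
  set (fc := fun s => mu * cos (psi s)).
  assert (Hx0u : ex_RInt fx 0 u) by (apply (exC1 _ _ _ T); [|exact Hx]; lra).
  assert (Hy0u : ex_RInt fy 0 u) by (apply (exC1 _ _ _ T); [|exact Hy]; lra).
  assert (Hxtu : ex_RInt fx t u) by (apply (exC2 _ 0); [|exact Hx0u]; lra).
  assert (Hytu : ex_RInt fy t u) by (apply (exC2 _ 0); [|exact Hy0u]; lra).
  assert (Ex : traj_x mu x0 psi u - traj_x mu x0 psi t = RInt fx t u).
  { unfold traj_x. fold fx. rewrite (R_split fx 0 t u) by (auto; lra). ring. }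
  assert (Ey : traj_y mu y0 psi u - traj_y mu y0 psi t = RInt fy t u).
  { unfold traj_y. fold fy. rewrite (R_split fy 0 t u) by (auto; lra). ring. }
  assert (Hctu : ex_RInt fc t u).
  { apply (exR_ext (fun s => fx s + 1)).
    - intros; unfold fx, fc; ring.
    - apply exR_plus; auto. apply exR_const. }
  assert (Ec : RInt fx t u = RInt fc t u - (u - t)).
  { rewrite (R_ext fx (fun s => fc s - 1)).
    2:{ intros; unfold fx, fc; ring. }
    rewrite R_minus; [| exact Hctu | apply exR_const].
    rewrite R_const. req; ring. }
  rewrite Ex, Ey, Ec.
  destruct (exist (fun A : R => A = RInt fc t u) (RInt fc t u) eq_refl) as [A HA].
  destruct (exist (fun B : R => B = RInt fy t u) (RInt fy t u) eq_refl) as [B HB].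
  rewrite <- HA, <- HB.
  replace (A - (u - t) + (u - t)) with A by ring.
  assert (E2 : A * A + B * B = RInt (fun s => A * fc s + B * fy s) t u).
  { rewrite R_plus. 2,3: apply exR_scal; auto.
    rewrite !R_scal; auto. rewrite HA, HB. req; ring. }
  assert (Hle : A * A + B * B <= (u - t) * (mu * sqrt (A*A + B*B))).
  { rewrite E2 at 1. rewrite <- (R_const t u (mu * sqrt (A*A+B*B))).
    apply RInt_le; auto.
    + apply exR_plus; apply exR_scal; auto.
    + apply exR_const.
    + intros s _. unfold fc, fy.
      assert (A * cos (psi s) + B * sin (psi s) <= sqrt (A*A+B*B)).
      { apply CS_pt. pose proof (sin2_cos2 (psi s)). unfold Rsqr in H. lra. }
      nra. }
  set (S := sqrt (A*A+B*B)) in *.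
  assert (HS : S * S = A*A + B*B) by (apply sqrt_sqrt; nra).
  assert (HS0 : 0 <= S) by apply sqrt_pos.
  assert (S <= mu * (u - t)).
  { destruct (Req_dec S 0) as [Z|NZ]. rewrite Z; nra.
    assert (S * S <= S * (mu * (u-t))) by nra.
    apply Rmult_le_reg_l with S; lra. }
  nra.
Qed.

Lemma sq_le_between a b : a^2 <= b^2 -> 0 <= b -> -b <= a <= b.
Proof.
  intros H Hb. split.
  - destruct (Rle_lt_dec (-b) a) as [h|h]; [exact h|].
    assert (0 < (-a - b) * (b - a)) by (apply Rmult_lt_0_compat; lra). nra.
  - destruct (Rle_lt_dec a b) as [h|h]; [exact h|].
    assert (0 < (a - b) * (a + b)) by (apply Rmult_lt_0_compat; lra). nra.
Qed.

Lemma chord_facts mu dx dy t : 0 < mu < 1 -> 0 <= t ->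
  (dx + t)^2 + dy^2 <= (mu*t)^2 ->
  dx <= -(1-mu)*t /\ -(1+mu)*t <= dx /\ dy*dy <= (mu*t)^2 /\
  (1 - mu*mu) * (dy*dy) <= mu*mu*(dx*dx).
Proof.
  intros Hmu Ht H.
  assert (H1 : (dx+t)^2 <= (mu*t)^2) by nra.
  assert (Hmt : 0 <= mu * t) by (apply Rmult_le_pos; lra).
  destruct (sq_le_between (dx+t) (mu*t) H1 Hmt) as [Hl Hu].
  repeat split.
  - nra.
  - nra.
  - pose proof (pow2_ge_0 (dx+t)). nra.
  - set (a := dx + t) in *.
    assert (dy*dy <= (mu*t)^2 - a*a) by nra.
    replace dx with (a - t) by (unfold a; ring).
    assert (0 <= (mu*mu*t - a)^2) by apply pow2_ge_0.
    assert ((1-mu*mu)*(dy*dy) <= (1-mu*mu)*((mu*t)^2 - a*a)) by (apply Rmult_le_compat_l; nra).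
    assert (E : (1-mu*mu)*((mu*t)^2 - a*a) = mu*mu*((a-t)*(a-t)) - (mu*mu*t - a)^2) by ring.
    lra.
Qed.

Lemma lin_bound mu s c w dx dy t : 0 < mu -> s*s + c*c = 1 -> w*w = mu*mu - c*c ->
  0 <= w -> 0 <= t -> (dx+t)^2 + dy^2 <= (mu*t)^2 ->
  (1 - (s+w)*s)*dx + (s+w)*c*dy <= t*((s+w)*w).
Proof.
  intros Hmu Hsc Hw Hw0 Ht H.
  set (a := 1 - (s+w)*s). set (b := (s+w)*c).
  assert (Hab : a*a + b*b = mu*mu).
  { unfold a, b. replace (mu*mu) with (w*w + c*c) by lra.
    replace 1 with (s*s+c*c) by lra. ring_simplify. nra. }
  assert (HCS : (a*(dx+t) + b*dy)^2 <= (mu*mu)*(mu*t)^2).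
  { assert (E : (a*(dx+t) + b*dy)^2 + (a*dy - b*(dx+t))^2 = (a*a+b*b)*((dx+t)^2+dy^2)) by ring.
    assert (0 <= (a*dy - b*(dx+t))^2) by apply pow2_ge_0.
    rewrite Hab in E. assert (0 <= mu*mu) by nra. nra. }
  assert (a*(dx+t) + b*dy <= mu*mu*t).
  { destruct (Rle_dec (a*(dx+t) + b*dy) 0). nra.
    assert (0 <= mu*mu*t) by nra.
    apply Rsqr_incr_0_var; [unfold Rsqr; nra | lra]. }
  assert (E2 : mu*mu - a = (s+w)*w).
  { unfold a. replace (mu*mu) with (w*w + c*c) by lra. nra. }
  nra.
Qed.

Lemma quad_bound mu s c w L t : 0 < mu < 1 -> s*s + c*c = 1 -> w*w = mu*mu - c*c ->
  0 <= w -> 0 < s -> 0 <= L -> 0 <= t ->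
  (t - L*s)^2 + (L*c)^2 <= (mu*t)^2 -> L <= t*(s+w).
Proof.
  intros Hmu Hsc Hw Hw0 Hs HL Ht H.
  assert (E : (t - L*s)^2 + (L*c)^2 - (mu*t)^2 = ((s+w)*t - L)*((s-w)*t - L)).
  { assert (E0 : (t - L*s)^2 + (L*c)^2 - (mu*t)^2 - ((s+w)*t - L)*((s-w)*t - L)
       = (L*L - t*t)*(s*s+c*c-1) + t*t*(w*w - (mu*mu - c*c))) by ring.
    rewrite Hsc, Hw in E0. lra. }
  destruct (Rle_dec L (t*(s+w))) as [Hle|Hlt]; auto.
  exfalso.
  assert (((s+w)*t - L) < 0) by nra.
  assert (((s-w)*t - L) < 0) by nra.
  nra.
Qed.

Lemma B_mono mu c c' w w' : 0 < mu -> -mu < c' -> c' <= c -> c < mu ->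
  w*w = mu*mu - c*c -> w'*w' = mu*mu - c'*c' -> 0 < w -> 0 < w' ->
  c'/w' <= c/w.
Proof.
  intros Hmu H1 H2 H3 Hw Hw' Hw0 Hw0'.
  assert (E1: (c'*w)^2 = c'*c'*(mu*mu - c*c)) by (rewrite <- Hw; ring).
  assert (E2: (c*w')^2 = c*c*(mu*mu - c'*c')) by (rewrite <- Hw'; ring).
  assert (c' * w <= c * w').
  { destruct (Rle_dec 0 c') as [P|N].
    - assert ((c'*w)^2 <= (c*w')^2).
      { rewrite E1, E2. assert (c'*c' <= c*c) by nra. nra. }
      apply Rsqr_incr_0_var; unfold Rsqr; nra.
    - destruct (Rle_dec 0 c) as [P'|N']. nra.
      assert ((c*w')^2 <= (c'*w)^2).
      { rewrite E1, E2. assert (c*c <= c'*c') by nra. nra. }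
      assert (- c*w' <= - c'*w).
      { apply Rsqr_incr_0_var; unfold Rsqr; nra. }
      nra. }
  unfold Rdiv. apply Rmult_le_reg_r with (w*w'). nra.
  field_simplify; lra.
Qed.

Lemma atan2_polar x y : 0 <= y -> 0 < x^2 + y^2 ->
  cos (atan2 y x) = x / sqrt (x^2+y^2) /\ sin (atan2 y x) = y / sqrt (x^2+y^2)
  /\ 0 <= atan2 y x.
Proof.
  intros Hy Hr.
  set (r := sqrt (x^2+y^2)).
  assert (Hr0 : 0 < r) by (apply sqrt_lt_R0; lra).
  assert (Hrr : r * r = x^2 + y^2) by (apply sqrt_sqrt; lra).
  unfold atan2.
  destruct (Rlt_dec 0 x) as [Hx|Hx].
  - assert (E : sqrt (1 + (y/x)²) = r / x).
    { apply sqrt_lem_1. unfold Rsqr. assert (0 <= (y/x)*(y/x)) by nra. lra.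
      apply Rlt_le, Rdiv_lt_0_compat; lra.
      unfold Rsqr. replace (r / x * (r / x)) with ((r*r)/(x*x)) by (field; lra).
      rewrite Hrr. field. lra. }
    rewrite cos_atan, sin_atan, E. split; [field; lra|]. split; [field; lra|].
    rewrite <- atan_0. destruct (Req_dec y 0) as [Z|NZ].
    + rewrite Z. replace (0/x) with 0 by (field; lra). lra.
    + left. apply atan_increasing. apply Rdiv_lt_0_compat; lra.
  - destruct (Rlt_dec x 0) as [Hx'|Hx'].
    + destruct (Rle_dec 0 y) as [_|C]; [|lra].
      assert (E : sqrt (1 + (y/x)²) = r / (-x)).
      { apply sqrt_lem_1. unfold Rsqr. assert (0 <= (y/x)*(y/x)) by nra. lra.
        apply Rlt_le, Rdiv_lt_0_compat; lra.
        unfold Rsqr. replace (r / -x * (r / -x)) with ((r*r)/(x*x)) by (field; lra).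
        rewrite Hrr. field. lra. }
      rewrite neg_cos, neg_sin, cos_atan, sin_atan, E.
      split; [field; lra|]. split; [field; lra|].
      pose proof (atan_bound (y/x)). pose proof PI_RGT_0. lra.
    + assert (x = 0) by lra. subst x.
      assert (Hy' : 0 < y) by (destruct (Req_dec y 0); [subst; lra| lra]).
      assert (Er : r = y) by (unfold r; apply sqrt_lem_1; nra).
      destruct (Rlt_dec 0 y) as [_|C]; [|lra].
      rewrite cos_PI2, sin_PI2, Er. split; [field; lra|]. split; [field; lra|].
      pose proof PI_RGT_0. lra.
Qed.

Lemma tan_geom x0 y0 : 1 < rnorm x0 y0 -> 0 <= y0 ->
  0 < theta_tan x0 y0 /\ 0 < sqrt (rnorm x0 y0 ^ 2 - 1) /\
  x0 = cos (theta_tan x0 y0) + sqrt (rnorm x0 y0 ^ 2 - 1) * sin (theta_tan x0 y0) /\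
  y0 = sin (theta_tan x0 y0) - sqrt (rnorm x0 y0 ^ 2 - 1) * cos (theta_tan x0 y0).
Proof.
  intros Hr Hy.
  unfold theta_tan. set (r := rnorm x0 y0) in *.
  assert (Hrr : r * r = x0^2 + y0^2) by (apply sqrt_sqrt; nra).
  assert (Hpos : 0 < x0^2 + y0^2) by nra.
  destruct (atan2_polar x0 y0 Hy Hpos) as [Ca [Sa Ha]].
  fold (rnorm x0 y0) in Ca, Sa. fold r in Ca, Sa.
  set (a := atan2 y0 x0) in *.
  set (L := sqrt (r^2 - 1)).
  assert (HL : L * L = r^2 - 1) by (apply sqrt_sqrt; nra).
  assert (HL0 : 0 < L) by (apply sqrt_lt_R0; nra).
  assert (Hb : -1 <= 1/r <= 1).
  { split; [apply Rle_trans with 0; [lra|]; apply Rlt_le, Rdiv_lt_0_compat; lra|].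
    apply Rmult_le_reg_r with r; [lra|]. field_simplify; lra. }
  set (b := acos (1/r)).
  assert (Cb : cos b = 1/r) by (apply cos_acos; auto).
  assert (Sb : sin b = L / r).
  { unfold b. rewrite sin_acos by auto. apply sqrt_lem_1.
    unfold Rsqr. assert (0 < 1/r < 1). { split. apply Rdiv_lt_0_compat; lra.
      apply Rmult_lt_reg_r with r; [lra|]. field_simplify; lra. } nra.
    apply Rlt_le, Rdiv_lt_0_compat; lra.
    unfold Rsqr. replace (L / r * (L / r)) with ((L*L)/(r*r)) by (field; lra).
    rewrite HL. field. lra. }
  assert (Hb0 : 0 < b).
  { unfold b. apply acos_bound_lt. split.
    apply Rlt_le_trans with 0; [lra|]. apply Rlt_le, Rdiv_lt_0_compat; lra.
    apply Rmult_lt_reg_r with r; [lra|]. field_simplify; lra. }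
  rewrite cos_plus, sin_plus, Cb, Sb, Ca, Sa.
  split; [lra|]. split; [exact HL0|].
  split; field_simplify; try lra; apply Rmult_eq_reg_r with (r^2); try nra;
    field_simplify; try lra; replace (L^2) with (L*L) by ring; rewrite HL;
    replace (r^2) with (r*r) by ring; rewrite Hrr; field.
Qed.

Definition clamp lo hi t := Rmin hi (Rmax lo t).

Lemma clamp_lip lo hi a b : lo <= hi -> Rabs (clamp lo hi a - clamp lo hi b) <= Rabs (a - b).
Proof. intros; unfold clamp, Rmin, Rmax; repeat destruct Rle_dec; unfold Rabs; repeat destruct Rcase_abs; lra. Qed.
Lemma clamp_in lo hi a : lo <= hi -> lo <= clamp lo hi a <= hi.
Proof. intros; unfold clamp, Rmin, Rmax; repeat destruct Rle_dec; lra. Qed.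
Lemma clamp_id lo hi a : lo <= a <= hi -> clamp lo hi a = a.
Proof. intros; unfold clamp, Rmin, Rmax; repeat destruct Rle_dec; lra. Qed.

Lemma lip_cont (f : R -> R) K : 0 < K -> (forall a b, Rabs (f a - f b) <= K * Rabs (a - b)) ->
  continuity f.
Proof.
  intros HK H x. unfold continuity_pt, continue_in, limit1_in, limit_in, dist; simpl; unfold R_dist.
  intros eps Heps. exists (eps / K). split. apply Rdiv_lt_0_compat; lra.
  intros y [_ Hy]. eapply Rle_lt_trans. apply H.
  apply Rmult_lt_reg_l with (/K). apply Rinv_0_lt_compat; lra.
  rewrite <- Rmult_assoc, Rinv_l by lra. rewrite Rmult_1_l. unfold Rdiv in Hy. lra.
Qed.

Lemma lip_cont' (f : R -> R) K x : 0 < K -> (forall a b, Rabs (f a - f b) <= K * Rabs (a - b)) ->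
  continuous f x.
Proof. intros HK H. apply continuity_pt_filterlim. apply (lip_cont f K HK H). Qed.

Lemma rnorm_ge1 a b : 1 <= rnorm a b -> 1 <= a^2 + b^2.
Proof.
  unfold rnorm. intros H. assert (0 <= a^2+b^2) by nra.
  pose proof (sqrt_sqrt (a^2+b^2) H0). nra.
Qed.

Lemma sq_le_between' a b : a*a <= b^2 -> 0 <= b -> -b <= a <= b.
Proof. intros H Hb. apply sq_le_between; auto. replace (a^2) with (a*a) by ring. exact H. Qed.

Definition Setup mu x0 y0 psi T theta :=
  0 < mu < 1 /\ admissible mu x0 y0 psi T /\ reaches mu x0 y0 psi T theta.

Lemma traj0 mu x0 y0 psi : traj_x mu x0 psi 0 = x0 /\ traj_y mu y0 psi 0 = y0.
Proof.
  unfold traj_x, traj_y. rewrite !RInt_point. split; apply Rplus_0_r.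
Qed.

Lemma S_chord mu x0 y0 psi T theta t u : Setup mu x0 y0 psi T theta -> 0 <= t -> t <= u -> u <= T ->
  let dx := traj_x mu x0 psi u - traj_x mu x0 psi t in
  let dy := traj_y mu y0 psi u - traj_y mu y0 psi t in
  (dx + (u-t))^2 + dy^2 <= (mu*(u-t))^2 /\
  dx <= -(1-mu)*(u-t) /\ -(1+mu)*(u-t) <= dx /\ dy*dy <= (mu*(u-t))^2 /\
  (1 - mu*mu) * (dy*dy) <= mu*mu*(dx*dx).
Proof.
  intros [Hmu [Ha _]] Ht Htu HuT dx dy.
  assert (H := chord mu x0 y0 psi T t u ltac:(lra) Ha Ht Htu HuT). fold dx dy in H.
  split; [exact H|]. apply chord_facts; auto; lra.
Qed.

Lemma S_lipx mu x0 y0 psi T theta a b : Setup mu x0 y0 psi T theta ->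
  Rabs (traj_x mu x0 psi (clamp 0 T a) - traj_x mu x0 psi (clamp 0 T b)) <= 2 * Rabs (a - b).
Proof.
  intros HS. assert (HT : 0 <= T) by (destruct HS as [_ [[HT _] _]]; exact HT).
  pose proof (clamp_lip 0 T a b HT) as Hl.
  pose proof (clamp_in 0 T a HT). pose proof (clamp_in 0 T b HT).
  assert (Hmu : 0 < mu < 1) by (destruct HS; auto).
  set (p := clamp 0 T a) in *. set (q := clamp 0 T b) in *.
  destruct (Rle_dec p q).
  - destruct (S_chord mu x0 y0 psi T theta p q) as [_ [H1 [H2 _]]]; auto; try lra.
    assert (0 <= (1-mu)*(q-p)) by (apply Rmult_le_pos; lra).
    assert ((1+mu)*(q-p) <= 2*(q-p)) by nra.
    rewrite Rabs_pos_eq by lra. rewrite Rabs_left1 in Hl by lra. lra.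
  - destruct (S_chord mu x0 y0 psi T theta q p) as [_ [H1 [H2 _]]]; auto; try lra.
    assert (0 <= (1-mu)*(p-q)) by (apply Rmult_le_pos; lra).
    assert ((1+mu)*(p-q) <= 2*(p-q)) by nra.
    rewrite Rabs_left1 by lra. rewrite Rabs_pos_eq in Hl by lra. lra.
Qed.

Lemma S_lipy mu x0 y0 psi T theta a b : Setup mu x0 y0 psi T theta ->
  Rabs (traj_y mu y0 psi (clamp 0 T a) - traj_y mu y0 psi (clamp 0 T b)) <= 1 * Rabs (a - b).
Proof.
  intros HS. assert (HT : 0 <= T) by (destruct HS as [_ [[HT _] _]]; exact HT).
  pose proof (clamp_lip 0 T a b HT) as Hl.
  pose proof (clamp_in 0 T a HT). pose proof (clamp_in 0 T b HT).
  assert (Hmu : 0 < mu < 1) by (destruct HS; auto).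
  set (p := clamp 0 T a) in *. set (q := clamp 0 T b) in *.
  destruct (Rle_dec p q).
  - destruct (S_chord mu x0 y0 psi T theta p q) as [_ [_ [_ [H3 _]]]]; auto; try lra.
    assert (0 <= mu*(q-p)) by (apply Rmult_le_pos; lra).
    destruct (sq_le_between' (traj_y mu y0 psi q - traj_y mu y0 psi p) (mu*(q-p))) as [H4 H5]; [exact H3|lra|].
    assert (mu*(q-p) <= (q-p)) by nra.
    rewrite Rabs_left1 in Hl by lra. rewrite Rmult_1_l; apply Rabs_le; split; lra.
  - destruct (S_chord mu x0 y0 psi T theta q p) as [_ [_ [_ [H3 _]]]]; auto; try lra.
    assert (0 <= mu*(p-q)) by (apply Rmult_le_pos; lra).
    destruct (sq_le_between' (traj_y mu y0 psi p - traj_y mu y0 psi q) (mu*(p-q))) as [H4 H5]; [exact H3|lra|].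
    assert (mu*(p-q) <= (p-q)) by nra.
    rewrite Rabs_pos_eq in Hl by lra. rewrite Rmult_1_l; apply Rabs_le; split; lra.
Qed.

Lemma S_T mu x0 y0 psi T theta : Setup mu x0 y0 psi T theta -> 0 <= T.
Proof. intros [_ [[HT _] _]]; exact HT. Qed.

Lemma S_ivt_x mu x0 y0 psi T theta a b c : Setup mu x0 y0 psi T theta ->
  0 <= a -> a <= b -> b <= T ->
  traj_x mu x0 psi b <= c <= traj_x mu x0 psi a ->
  exists t, a <= t <= b /\ traj_x mu x0 psi t = c.
Proof.
  intros HS Ha Hab Hb Hc.
  set (f := fun t => traj_x mu x0 psi (clamp 0 T t)).
  assert (Hf : continuity f).
  { apply (lip_cont f 2); [lra|]. intros; apply (S_lipx mu x0 y0 psi T theta); auto. }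
  assert (Ea : f a = traj_x mu x0 psi a) by (unfold f; rewrite clamp_id; auto; lra).
  assert (Eb : f b = traj_x mu x0 psi b) by (unfold f; rewrite clamp_id; auto; lra).
  destruct (IVT_gen f a b c Hf) as [t [Ht Hft]].
  { rewrite Ea, Eb. unfold Rmin, Rmax; destruct Rle_dec; lra. }
  rewrite Rmin_left, Rmax_right in Ht by lra.
  exists t. split; auto. unfold f in Hft. rewrite clamp_id in Hft; auto; lra.
Qed.

Lemma S_ivt_y mu x0 y0 psi T theta a b c : Setup mu x0 y0 psi T theta ->
  0 <= a -> a <= b -> b <= T ->
  Rmin (traj_y mu y0 psi a) (traj_y mu y0 psi b) <= c <= Rmax (traj_y mu y0 psi a) (traj_y mu y0 psi b) ->
  exists t, a <= t <= b /\ traj_y mu y0 psi t = c.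
Proof.
  intros HS Ha Hab Hb Hc.
  set (f := fun t => traj_y mu y0 psi (clamp 0 T t)).
  assert (Hf : continuity f).
  { apply (lip_cont f 1); [lra|]. intros; apply (S_lipy mu x0 y0 psi T theta); auto. }
  assert (Ea : f a = traj_y mu y0 psi a) by (unfold f; rewrite clamp_id; auto; lra).
  assert (Eb : f b = traj_y mu y0 psi b) by (unfold f; rewrite clamp_id; auto; lra).
  destruct (IVT_gen f a b c Hf) as [t [Ht Hft]].
  { rewrite Ea, Eb. exact Hc. }
  rewrite Rmin_left, Rmax_right in Ht by lra.
  exists t. split; auto. unfold f in Hft. rewrite clamp_id in Hft; auto; lra.
Qed.

Lemma S_xdec mu x0 y0 psi T theta t u : Setup mu x0 y0 psi T theta ->
  0 <= t -> t < u -> u <= T -> traj_x mu x0 psi u < traj_x mu x0 psi t.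
Proof.
  intros HS Ht Htu Hu. assert (Hmu : 0 < mu < 1) by (destruct HS; auto).
  destruct (S_chord mu x0 y0 psi T theta t u HS) as [_ [H1 _]]; try lra.
  assert (0 < (1-mu)*(u-t)) by (apply Rmult_lt_0_compat; lra). lra.
Qed.

Lemma S_xmono mu x0 y0 psi T theta t u : Setup mu x0 y0 psi T theta ->
  0 <= t -> 0 <= u -> t <= T -> u <= T -> traj_x mu x0 psi u <= traj_x mu x0 psi t -> t <= u.
Proof.
  intros HS Ht Hu HtT HuT H. destruct (Rle_lt_dec t u) as [h|h]; auto.
  pose proof (S_xdec mu x0 y0 psi T theta u t HS Hu h HtT). lra.
Qed.

Lemma S_constr mu x0 y0 psi T theta t : Setup mu x0 y0 psi T theta -> 0 <= t <= T ->
  1 <= traj_x mu x0 psi t ^ 2 + traj_y mu y0 psi t ^ 2.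
Proof. intros [_ [[_ [_ [_ H]]] _]] Ht. apply rnorm_ge1, H; auto. Qed.

Lemma S_Tpos mu x0 y0 psi T theta : Setup mu x0 y0 psi T theta -> 1 < rnorm x0 y0 -> 0 < T.
Proof.
  intros HS Hr. pose proof (S_T _ _ _ _ _ _ HS). destruct (Req_dec T 0) as [Z|]; [|lra].
  exfalso. destruct HS as [_ [_ [Rx Ry]]]. subst T.
  destruct (traj0 mu x0 y0 psi) as [E1 E2]. rewrite E1 in Rx. rewrite E2 in Ry.
  unfold rnorm in Hr. rewrite Rx, Ry in Hr.
  replace (cos theta ^ 2 + sin theta ^2) with 1 in Hr by (pose proof (sin2_cos2 theta); unfold Rsqr in *; nra).
  rewrite sqrt_1 in Hr. lra.
Qed.

Lemma S_final mu x0 y0 psi T theta : Setup mu x0 y0 psi T theta -> 1 < rnorm x0 y0 ->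
  - mu <= cos theta.
Proof.
  intros HS Hr. pose proof (S_Tpos _ _ _ _ _ _ HS Hr) as HT.
  assert (Hmu : 0 < mu < 1) by (destruct HS; auto).
  destruct (Rle_lt_dec (-mu) (cos theta)) as [h|h]; auto. exfalso.
  set (e := - mu - cos theta).
  set (tau := Rmin T (e/5)).
  assert (Htau : 0 < tau /\ tau <= T /\ tau <= e/5).
  { unfold tau, Rmin; destruct Rle_dec; unfold e in *; lra. }
  destruct (S_chord mu x0 y0 psi T theta (T - tau) T HS) as [H1 [H2 [H3 [H4 _]]]]; try lra.
  replace (T - (T - tau)) with tau in * by ring.
  pose proof (S_constr mu x0 y0 psi T theta (T - tau) HS ltac:(lra)) as Hc.
  destruct HS as [_ [_ [Rx Ry]]]. rewrite Rx, Ry in *.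
  set (dx := cos theta - traj_x mu x0 psi (T - tau)) in *.
  set (dy := sin theta - traj_y mu y0 psi (T - tau)) in *.
  replace (traj_x mu x0 psi (T - tau)) with (cos theta - dx) in Hc by (unfold dx; ring).
  replace (traj_y mu y0 psi (T - tau)) with (sin theta - dy) in Hc by (unfold dy; ring).
  pose proof (sin2_cos2 theta) as Hsc. unfold Rsqr in Hsc.
  assert (HP : 2 * (cos theta * dx + sin theta * dy) <= dx*dx + dy*dy) by nra.
  assert (Hcs : -(cos theta * (dx+tau) + sin theta * dy) <= mu * tau).
  { replace (-(cos theta * (dx+tau) + sin theta * dy)) with ((-(dx+tau))*cos theta + (-dy)*sin theta) by ring.
    eapply Rle_trans. apply (CS_pt (-(dx+tau)) (-dy) (cos theta) (sin theta)). lra.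
    replace (- (dx + tau) * - (dx + tau) + - dy * - dy) with ((dx+tau)^2 + dy^2) by ring.
    rewrite <- (sqrt_pow2 (mu*tau)) by nra. apply sqrt_le_1; [pose proof (pow2_ge_0 (dx+tau)); pose proof (pow2_ge_0 dy); lra | apply pow2_ge_0 | lra]. }
  assert (Hd1 : -(2*tau) <= dx) by nra. assert (Hd2: dx <= 0) by nra.
  assert (dx*dx <= 4*tau*tau) by nra.
  assert ((mu*tau)^2 <= tau*tau).
  { replace ((mu*tau)^2) with ((mu*mu)*(tau*tau)) by ring.
    assert (mu*mu <= 1) by nra. assert (0 <= tau*tau) by nra.
    apply Rle_trans with (1*(tau*tau)); [apply Rmult_le_compat_r; lra | lra]. }
  assert (2*tau*(-cos theta - mu) <= 5*tau*tau) by lra.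
  assert (-cos theta - mu <= 5/2*tau).
  { apply Rmult_le_reg_l with (2*tau); [lra|]. nra. }
  unfold e in *. lra.
Qed.

Lemma S_xle mu x0 y0 psi T theta t u : Setup mu x0 y0 psi T theta ->
  0 <= t -> t <= u -> u <= T -> traj_x mu x0 psi u <= traj_x mu x0 psi t.
Proof.
  intros HS Ht Htu Hu. assert (Hmu : 0 < mu < 1) by (destruct HS; auto).
  destruct (S_chord mu x0 y0 psi T theta t u HS) as [_ [H1 _]]; try lra.
  assert (0 <= (1-mu)*(u-t)) by (apply Rmult_le_pos; lra). lra.
Qed.

Lemma S_upper mu x0 y0 psi T theta t : Setup mu x0 y0 psi T theta ->
  0 < sin theta -> -1 < cos theta -> 0 <= t <= T ->
  -1 < traj_x mu x0 psi t < 1 -> 0 < traj_y mu y0 psi t.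
Proof.
  intros HS Hs Hc Ht Hx.
  destruct (Rlt_le_dec 0 (traj_y mu y0 psi t)) as [h|h]; auto. exfalso.
  pose proof (S_constr _ _ _ _ _ _ t HS Ht) as Hk.
  assert (traj_x mu x0 psi t ^ 2 < 1) by nra.
  assert (Hneg : traj_y mu y0 psi t < 0).
  { destruct (Req_dec (traj_y mu y0 psi t) 0) as [Z|NZ]; [rewrite Z in Hk; nra | lra]. }
  assert (HYT : traj_y mu y0 psi T = sin theta) by (destruct HS as [_ [_ [_ R]]]; exact R).
  assert (HXT : traj_x mu x0 psi T = cos theta) by (destruct HS as [_ [_ [R _]]]; exact R).
  destruct (S_ivt_y mu x0 y0 psi T theta t T 0 HS) as [s [Hs' Hys]]; try lra.
  { rewrite HYT. unfold Rmin, Rmax; destruct Rle_dec; lra. }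
  pose proof (S_xle _ _ _ _ _ _ t s HS ltac:(lra) ltac:(lra) ltac:(lra)).
  pose proof (S_xle _ _ _ _ _ _ s T HS ltac:(lra) ltac:(lra) ltac:(lra)).
  pose proof (S_constr _ _ _ _ _ _ s HS ltac:(lra)) as Hk2.
  rewrite Hys in Hk2. assert (-1 < traj_x mu x0 psi s < 1) by lra. nra.
Qed.

Lemma S_cross mu x0 y0 psi T theta c : Setup mu x0 y0 psi T theta ->
  cos theta <= c <= x0 -> exists t, 0 <= t <= T /\ traj_x mu x0 psi t = c.
Proof.
  intros HS Hc. pose proof (S_T _ _ _ _ _ _ HS).
  apply (S_ivt_x mu x0 y0 psi T theta 0 T c HS); try lra.
  destruct (traj0 mu x0 y0 psi) as [E _]. rewrite E.
  destruct HS as [_ [_ [R _]]]. rewrite R. exact Hc.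
Qed.

Lemma S_ybound mu x0 y0 psi T theta t phi : Setup mu x0 y0 psi T theta ->
  0 < sin theta -> -1 < cos theta -> 0 <= t <= T -> 0 < phi < PI ->
  traj_x mu x0 psi t = cos phi -> sin phi <= traj_y mu y0 psi t.
Proof.
  intros HS Hs Hc Ht Hphi Hx.
  assert (Hsp : 0 < sin phi) by (apply sin_gt_0; lra).
  pose proof (sin2_cos2 phi) as Hsc. unfold Rsqr in Hsc.
  assert (-1 < cos phi < 1) by nra.
  assert (Hy : 0 < traj_y mu y0 psi t) by (apply (S_upper mu x0 y0 psi T theta t); auto; lra).
  pose proof (S_constr _ _ _ _ _ _ t HS Ht) as Hk. rewrite Hx in Hk.
  assert (sin phi * sin phi <= traj_y mu y0 psi t * traj_y mu y0 psi t) by nra.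
  destruct (Rle_lt_dec (sin phi) (traj_y mu y0 psi t)) as [h|h]; auto. nra.
Qed.

Definition wf mu p := sqrt (mu^2 - cos p ^ 2).
Definition vf mu p := sin p + wf mu p.
Definition vh mu a b p := vf mu (clamp a b p).
Definition hf mu a b p := / vh mu a b p.
Definition Ff mu a b p : R := RInt (hf mu a b) a p.

Definition ArcH mu a b := 0 < mu < 1 /\ 0 < a /\ a <= b /\ b < PI /\ cos a <= mu /\ - mu <= cos b.

Lemma cos_le_mono x y : 0 <= x -> x <= y -> y <= PI -> cos y <= cos x.
Proof.
  intros. destruct (Req_dec x y) as [E|N]. subst; lra.
  left; apply cos_decreasing_1; lra.
Qed.

Lemma arc_pt mu a b p : ArcH mu a b -> a <= p <= b ->
  -mu <= cos p <= mu /\ 0 < sin p /\ wf mu p * wf mu p = mu*mu - cos p * cos p /\ 0 <= wf mu p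
  /\ 0 < vf mu p /\ vf mu p <= 2 /\ sin p * sin p + cos p * cos p = 1.
Proof.
  intros [Hmu [Ha [Hab [Hb [Hca Hcb]]]]] Hp.
  pose proof (cos_le_mono a p ltac:(lra) ltac:(lra) ltac:(lra)).
  pose proof (cos_le_mono p b ltac:(lra) ltac:(lra) ltac:(lra)).
  assert (Hs : 0 < sin p) by (apply sin_gt_0; lra).
  assert (Hsq : 0 <= mu^2 - cos p ^2) by nra.
  assert (Hw : wf mu p * wf mu p = mu*mu - cos p * cos p).
  { unfold wf. rewrite sqrt_sqrt; [ring|exact Hsq]. }
  assert (Hw0 : 0 <= wf mu p) by apply sqrt_pos.
  pose proof (sin2_cos2 p) as Hsc. unfold Rsqr in Hsc.
  assert (wf mu p <= 1) by nra.
  assert (sin p <= 1) by nra.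
  unfold vf. repeat split; try lra.
Qed.

Lemma clamp_cont a b x : a <= b -> continuous (clamp a b) x.
Proof. intros. apply (lip_cont' _ 1); [lra|]. intros; rewrite Rmult_1_l; apply clamp_lip; auto. Qed.

Lemma vf_cont mu x : continuous (vf mu) x.
Proof.
  unfold vf, wf.
  apply (continuous_plus (V:=R_NormedModule) sin (fun p => sqrt (mu^2 - cos p ^2))).
  - apply continuity_pt_filterlim. apply continuity_sin.
  - apply continuous_sqrt_comp.
    apply (ex_derive_continuous (fun p => mu^2 - cos p ^ 2)). auto_derive; auto.
Qed.

Lemma vh_pos mu a b p : ArcH mu a b -> 0 < vh mu a b p <= 2.
Proof.
  intros H. unfold vh. assert (a <= b) by (destruct H as [_ [_ [? _]]]; auto).
  destruct (arc_pt mu a b (clamp a b p) H (clamp_in a b p ltac:(lra))) as [_ [_ [_ [_ [? [? _]]]]]].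
  lra.
Qed.

Lemma hf_cont mu a b x : ArcH mu a b -> continuous (hf mu a b) x.
Proof.
  intros H. assert (a <= b) by (destruct H as [_ [_ [? _]]]; auto).
  unfold hf. apply continuous_Rinv_comp.
  - unfold vh. apply (continuous_comp (clamp a b) (vf mu)). apply clamp_cont; auto. apply vf_cont.
  - pose proof (vh_pos mu a b x H). lra.
Qed.

Lemma hf_bounds mu a b p : ArcH mu a b -> 1/2 <= hf mu a b p.
Proof.
  intros H. pose proof (vh_pos mu a b p H). unfold hf.
  apply Rmult_le_reg_r with (vh mu a b p); [lra|]. rewrite Rinv_l by lra. lra.
Qed.

Lemma hf_exR mu a b x y : ArcH mu a b -> ex_RInt (hf mu a b) x y.
Proof. intros H. apply exR_cont. intros; apply hf_cont; auto. Qed.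

Lemma Ff_diff mu a b x y : ArcH mu a b -> Ff mu a b y - Ff mu a b x = RInt (hf mu a b) x y.
Proof.
  intros H. unfold Ff. rewrite <- (R_Chasles (hf mu a b) a x y) by (apply hf_exR; auto). ring.
Qed.

Lemma Ff_incr mu a b x y : ArcH mu a b -> x <= y -> (y - x)/2 <= Ff mu a b y - Ff mu a b x.
Proof.
  intros H Hxy. rewrite Ff_diff by auto.
  replace ((y-x)/2) with (RInt (fun _ => 1/2) x y) by (rewrite R_const; req; field).
  apply RInt_le; auto. apply exR_const. apply hf_exR; auto.
  intros; apply hf_bounds; auto.
Qed.

Lemma Ff_a mu a b : Ff mu a b a = 0.
Proof. unfold Ff. exact (RInt_point (V:=R_CompleteNormedModule) a (hf mu a b)). Qed.

Lemma Ff_deriv mu a b x : ArcH mu a b -> is_derive (Ff mu a b) x (hf mu a b x).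
Proof.
  intros H. unfold Ff. apply (is_derive_RInt (V:=R_NormedModule) (hf mu a b) (fun p => RInt (hf mu a b) a p) a x).
  - apply filter_forall. intros y. apply (RInt_correct (V:=R_CompleteNormedModule)). apply hf_exR; auto.
  - apply hf_cont; auto.
Qed.

Lemma Ff_cont mu a b : ArcH mu a b -> continuity (Ff mu a b).
Proof.
  intros H x. apply continuity_pt_filterlim. apply (ex_derive_continuous (Ff mu a b)).
  exists (hf mu a b x). apply Ff_deriv; auto.
Qed.

Lemma G_sig mu a b (H : ArcH mu a b) (s : R) : {p | Ff mu a b p = s}.
Proof.
  destruct (IVT_gen (Ff mu a b) (a - 2 * Rabs s) (a + 2 * Rabs s) s (Ff_cont mu a b H)) as [p [_ Hp]].
  - pose proof (Ff_incr mu a b (a - 2*Rabs s) a H ltac:(pose proof (Rabs_pos s); lra)).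
    pose proof (Ff_incr mu a b a (a + 2*Rabs s) H ltac:(pose proof (Rabs_pos s); lra)).
    rewrite Ff_a in *. pose proof (Rabs_pos s).
    assert (- Rabs s <= s <= Rabs s) by (unfold Rabs; destruct Rcase_abs; lra).
    unfold Rmin, Rmax; destruct Rle_dec; lra.
  - exists p; exact Hp.
Qed.

Definition Dpt mu a b (H : ArcH mu a b) (y : R) : derivable_pt (Ff mu a b) y :=
  exist _ (hf mu a b y) (proj1 (is_derive_Reals _ _ _) (Ff_deriv mu a b y H)).

Lemma G_props mu a b : ArcH mu a b -> exists G : R -> R,
  (forall s, Ff mu a b (G s) = s) /\ (forall p, G (Ff mu a b p) = p) /\
  (forall s s', s <= s' -> G s <= G s') /\
  (forall s s', Rabs (G s - G s') <= 2 * Rabs (s - s')) /\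
  (forall s, is_derive G s (vh mu a b (G s))).
Proof.
  intros H.
  set (F := Ff mu a b).
  set (G := fun s => proj1_sig (G_sig mu a b H s)).
  assert (FG : forall s, F (G s) = s) by (intros s; unfold G; destruct (G_sig mu a b H s); auto).
  assert (Finj : forall x y, F x = F y -> x = y).
  { intros x y E. destruct (Rtotal_order x y) as [h|[h|h]]; auto.
    - pose proof (Ff_incr mu a b x y H ltac:(lra)). fold F in H0. lra.
    - pose proof (Ff_incr mu a b y x H ltac:(lra)). fold F in H0. lra. }
  assert (GF : forall p, G (F p) = p) by (intros; apply Finj; rewrite FG; auto).
  assert (Gmono : forall s s', s <= s' -> G s <= G s').
  { intros s s' Hs. destruct (Rle_lt_dec (G s) (G s')) as [h|h]; auto.
    pose proof (Ff_incr mu a b (G s') (G s) H ltac:(lra)). fold F in H0. rewrite !FG in H0. lra. }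
  assert (Glip : forall s s', Rabs (G s - G s') <= 2 * Rabs (s - s')).
  { intros s s'. destruct (Rle_dec s s') as [h|h].
    - pose proof (Gmono s s' h). pose proof (Ff_incr mu a b (G s) (G s') H H0). fold F in H1.
      rewrite !FG in H1. rewrite Rabs_left1 by lra. rewrite Rabs_left1 by lra. lra.
    - pose proof (Gmono s' s ltac:(lra)). pose proof (Ff_incr mu a b (G s') (G s) H H0). fold F in H1.
      rewrite !FG in H1. rewrite Rabs_pos_eq by lra. rewrite Rabs_pos_eq by lra. lra. }
  exists G. split; [exact FG|]. split; [exact GF|]. split; [exact Gmono|]. split; [exact Glip|].
  intros s.
  assert (Hc : continuity_pt G s).
  { apply (lip_cont G 2); [lra|exact Glip]. }
  assert (Hinc : G (s-1) <= G s <= G (s+1)) by (split; apply Gmono; lra).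
  pose proof (Ranalysis5.derivable_pt_lim_recip_interv F G (s-1) (s+1) s
     (fun a0 _ => Dpt mu a b H a0) Hc ltac:(lra) ltac:(lra) Hinc) as D.
  assert (Hid : forall x0, s - 1 <= x0 <= s + 1 -> comp F G x0 = id x0).
  { intros; unfold comp, id; apply FG. }
  specialize (D Hid).
  simpl in D.
  pose proof (vh_pos mu a b (G s) H).
  assert (hf mu a b (G s) <> 0).
  { unfold hf. apply Rinv_neq_0_compat. lra. }
  specialize (D H1).
  apply is_derive_Reals.
  replace (vh mu a b (G s)) with (1 / hf mu a b (G s)); auto.
  unfold hf. field. lra.
Qed.

Fixpoint psum (f : nat -> R) (n : nat) : R :=
  match n with O => 0 | S k => psum f k + f k end.

Lemma psum_le f g n : (forall i, (i < n)%nat -> f i <= g i) -> psum f n <= psum g n.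
Proof.
  induction n; simpl; intros H; [lra|].
  assert (psum f n <= psum g n) by (apply IHn; intros; apply H; lia).
  specialize (H n ltac:(lia)). lra.
Qed.

Lemma psum_plus_const f c n : psum (fun i => f i + c) n = psum f n + INR n * c.
Proof.
  induction n; simpl; [ring|]. rewrite IHn. destruct n; simpl; ring.
Qed.

Lemma sin_lb x : 0 <= x <= PI -> x - x^3/6 <= sin x.
Proof.
  intros H. destruct (sin_bound x 0 ltac:(lra) ltac:(lra)) as [H1 _].
  replace (x - x^3/6) with (sin_approx x (2*0+1)); auto.
  unfold sin_approx, sin_term. simpl. field.
Qed.

Definition dlt a b N := (b - a) / INR N.
Definition phj a b N j := a + INR j * dlt a b N.
Definition mj a b N j := a + (INR j + 1/2) * dlt a b N.
Definition Ssum mu a b N := psum (fun i => 2 * sin (dlt a b N / 2) / vf mu (mj a b N i)) N.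

Lemma Ff_psum mu a b N j : ArcH mu a b ->
  Ff mu a b (phj a b N j) = psum (fun i => RInt (hf mu a b) (phj a b N i) (phj a b N (S i))) j.
Proof.
  intros H. induction j.
  - simpl. unfold phj. replace (a + INR 0 * dlt a b N) with a by (simpl; ring). apply Ff_a.
  - simpl. rewrite <- IHj. rewrite <- (Ff_diff mu a b (phj a b N j) (phj a b N (S j)) H). ring.
Qed.

Lemma hf_le mu a b p : ArcH mu a b -> a <= p <= b -> hf mu a b p <= 1 / (1 - mu*mu).
Proof.
  intros H Hp. destruct (arc_pt mu a b p H Hp) as [Hc [Hs [Hw [Hw0 [Hv [Hv2 Hsc]]]]]].
  assert (Hm : 0 < mu < 1) by (destruct H; auto).
  unfold hf, vh. rewrite clamp_id by auto.
  assert (sin p <= 1) by nra.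
  assert (1 - mu*mu <= sin p) by nra.
  assert (1 - mu*mu <= vf mu p) by (unfold vf; lra).
  assert (0 < 1 - mu*mu) by nra.
  unfold Rdiv. rewrite Rmult_1_l. apply Rinv_le_contravar; lra.
Qed.

Lemma riemann mu a b : ArcH mu a b -> a < b -> forall eps, 0 < eps ->
  exists N, (0 < N)%nat /\ Ff mu a b b <= Ssum mu a b N + eps.
Proof.
  intros H Hab eps Heps.
  assert (Hm : 0 < mu < 1) by (destruct H; auto).
  assert (HPI : b < PI) by (destruct H as [_ [_ [_ [? _]]]]; auto).
  assert (Ha0 : 0 < a) by (destruct H as [_ [? _]]; auto).
  set (H0 := 1 / (1 - mu*mu)).
  assert (HH0 : 0 < H0) by (unfold H0; apply Rdiv_lt_0_compat; nra).
  set (e1 := eps / (2 * (b - a))).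
  assert (He1 : 0 < e1) by (unfold e1; apply Rdiv_lt_0_compat; lra).
  destruct (Heine_cor2 (f := hf mu a b) (a := a) (b := b)
     (fun x _ => proj2 (continuity_pt_filterlim _ _) (hf_cont mu a b x H)) (mkposreal e1 He1)) as [d0 Hd0].
  simpl in Hd0.
  set (rho := Rmin (Rmin (d0/2) 1) (eps / (2 * (b - a) * H0))).
  assert (Hrho : 0 < rho).
  { unfold rho. pose proof (cond_pos d0). repeat apply Rmin_pos; try lra.
    apply Rdiv_lt_0_compat; [lra|]. apply Rmult_lt_0_compat; lra. }
  destruct (archimed_cor1 (rho / (b - a))) as [N [HN HN0]].
  { apply Rdiv_lt_0_compat; lra. }
  exists N. split; auto.
  assert (HNpos : 0 < INR N) by (apply lt_0_INR; auto).
  set (d := dlt a b N).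
  assert (Hd : 0 < d) by (unfold d, dlt; apply Rdiv_lt_0_compat; lra).
  assert (Hdr : d < rho).
  { unfold d, dlt. apply Rmult_lt_reg_r with (/ (b - a)). apply Rinv_0_lt_compat; lra.
    replace ((b - a) / INR N * / (b - a)) with (/ INR N) by (field; lra). exact HN. }
  assert (Hd1 : d <= 1) by (unfold rho in Hdr; pose proof (Rmin_l (Rmin (d0/2) 1) (eps / (2 * (b - a) * H0)));
     pose proof (Rmin_r (d0/2) 1); lra).
  assert (Hd2 : d <= d0 / 2) by (unfold rho in Hdr; pose proof (Rmin_l (Rmin (d0/2) 1) (eps / (2 * (b - a) * H0)));
     pose proof (Rmin_l (d0/2) 1); lra).
  assert (Hd3 : d <= eps / (2 * (b - a) * H0)) by (unfold rho in Hdr; pose proof (Rmin_r (Rmin (d0/2) 1) (eps / (2 * (b - a) * H0))); lra).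
  assert (HNd : INR N * d = b - a) by (unfold d, dlt; field; lra).
  assert (Hphi : forall i, (i <= N)%nat -> a <= phj a b N i <= b).
  { intros i Hi. unfold phj. fold d. apply le_INR in Hi. pose proof (pos_INR i). split; nra. }
  assert (Hphb : phj a b N N = b) by (unfold phj; fold d; lra).
  replace (Ff mu a b b) with (Ff mu a b (phj a b N N)) by (rewrite Hphb; auto). rewrite Ff_psum by auto.
  assert (Hpiece : forall i, (i < N)%nat ->
     RInt (hf mu a b) (phj a b N i) (phj a b N (S i)) <= 2 * sin (d / 2) / vf mu (mj a b N i) + (d^3/24 * H0 + d * e1)).
  { intros i Hi.
    assert (Hs : phj a b N (S i) = phj a b N i + d) by (unfold phj; rewrite S_INR; fold d; ring).
    assert (Hm_ : mj a b N i = phj a b N i + d/2) by (unfold mj, phj; fold d; field).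
    pose proof (Hphi i ltac:(lia)). pose proof (Hphi (S i) ltac:(lia)).
    assert (Hmi : a <= mj a b N i <= b) by lra.
    assert (E : RInt (hf mu a b) (phj a b N i) (phj a b N (S i)) <= d * (hf mu a b (mj a b N i) + e1)).
    { replace (d * (hf mu a b (mj a b N i) + e1)) with
        (RInt (fun _ => hf mu a b (mj a b N i) + e1) (phj a b N i) (phj a b N (S i)))
        by (rewrite R_const, Hs; req; ring).
      apply RInt_le; [lra | apply hf_exR; auto | apply exR_const |].
      intros z Hz.
      assert (Hz2 : Rabs (hf mu a b z - hf mu a b (mj a b N i)) < e1).
      { apply Hd0; try lra. apply Rabs_def1; lra. }
      apply Rabs_def2 in Hz2. lra. }
    assert (Hhf : hf mu a b (mj a b N i) = / vf mu (mj a b N i)) by (unfold hf, vh; rewrite clamp_id; auto).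
    pose proof (hf_le mu a b (mj a b N i) H Hmi) as Hle. fold H0 in Hle.
    assert (Hpos : 0 <= hf mu a b (mj a b N i)) by (pose proof (hf_bounds mu a b (mj a b N i) H); lra).
    pose proof (sin_lb (d/2) ltac:(pose proof PI_RGT_0; pose proof PI2_3_2; split; [lra|]; pose proof PI_4; lra)) as Hsl.
    assert (Hsl2 : d - d^3/24 <= 2 * sin (d/2)) by (replace (d - d^3/24) with (2 * (d/2 - (d/2)^3/6)) by field; lra).
    replace (2 * sin (d / 2) / vf mu (mj a b N i)) with (2 * sin (d/2) * hf mu a b (mj a b N i)) by (rewrite Hhf; unfold Rdiv; ring).
    assert (d * hf mu a b (mj a b N i) <= 2 * sin (d/2) * hf mu a b (mj a b N i) + d^3/24 * H0).
    { assert ((d - 2 * sin (d/2)) * hf mu a b (mj a b N i) <= d^3/24 * H0).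
      { apply Rle_trans with ((d^3/24) * hf mu a b (mj a b N i)).
        apply Rmult_le_compat_r; lra. apply Rmult_le_compat_l; [|lra]. 
        assert (0 < d^3) by (apply pow_lt; lra). lra. }
      lra. }
    lra. }
  eapply Rle_trans. apply (psum_le _ (fun i => 2 * sin (d / 2) / vf mu (mj a b N i) + (d^3/24 * H0 + d * e1))).
  exact Hpiece.
  rewrite psum_plus_const. unfold Ssum. fold d.
  apply Rplus_le_compat_l.
  replace (INR N * (d ^ 3 / 24 * H0 + d * e1)) with ((INR N * d) * (d^2/24 * H0 + e1)) by field.
  rewrite HNd.
  assert (d^2 <= d) by nra.
  assert (d * H0 <= eps / (2 * (b - a))).
  { apply Rmult_le_reg_r with (/ H0). apply Rinv_0_lt_compat; lra.
    rewrite Rmult_assoc, Rinv_r, Rmult_1_r by lra.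
    replace (eps / (2 * (b - a)) * / H0) with (eps / (2 * (b - a) * H0)) by (field; lra). lra. }
  assert (d^2/24*H0 <= eps / (2*(b-a))) by nra.
  unfold e1 in *.
  assert (Hfin : (b - a) * (d ^ 2 / 24 * H0 + eps / (2 * (b - a))) <= (b-a) * (eps / (2*(b-a)) + eps / (2 * (b - a)))).
  { apply Rmult_le_compat_l; lra. }
  replace ((b-a) * (eps / (2*(b-a)) + eps / (2 * (b - a)))) with eps in Hfin by (field; lra).
  lra.
Qed.

Lemma step_alg s c w l e e' dx dy tau : s*s + c*c = 1 -> 0 < w -> 0 < s + w ->
  dx = -(l*s) -> dy = e' - e + l*c ->
  (1 - (s+w)*s)*dx + (s+w)*c*dy <= tau*((s+w)*w) ->
  l/(s+w) + (c/w)*(e'-e) <= tau.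
Proof.
  intros Hsc Hw Hv Hdx Hdy H. subst dx dy.
  assert (E : (1 - (s+w)*s)*(-(l*s)) + (s+w)*c*(e' - e + l*c) = l*w + (s+w)*c*(e'-e)).
  { replace (l*w) with (l*w*(s*s+c*c) - l*s*(1 - (s*s+c*c))) by (rewrite Hsc; ring). ring. }
  rewrite E in H.
  apply Rmult_le_reg_r with ((s+w)*w). apply Rmult_lt_0_compat; lra.
  replace ((l / (s + w) + c / w * (e' - e)) * ((s + w) * w)) with (l*w + (s+w)*c*(e'-e)) by (field; lra).
  lra.
Qed.

Lemma chord_id m h : cos (m+h) - cos (m-h) = -(2*sin h * sin m) /\ sin (m+h) - sin (m-h) = 2*sin h * cos m.
Proof. rewrite cos_plus, cos_minus, sin_plus, sin_minus. split; ring. Qed.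

Lemma cos_strict x y : 0 <= x -> x < y -> y <= PI -> cos y < cos x.
Proof. intros; apply cos_decreasing_1; lra. Qed.

Definition Bf mu p := cos p / wf mu p.

Lemma interior mu a b p : ArcH mu a b -> a < p < b ->
  -mu < cos p < mu /\ 0 < wf mu p.
Proof.
  intros H Hp. destruct H as [Hm [Ha [Hab [Hb [Hca Hcb]]]]].
  pose proof (cos_strict a p ltac:(lra) ltac:(lra) ltac:(lra)).
  pose proof (cos_strict p b ltac:(lra) ltac:(lra) ltac:(lra)).
  split; [lra|]. unfold wf. apply sqrt_lt_R0. nra.
Qed.

Lemma lower_bound mu x0 y0 psi T a b L :
  Setup mu x0 y0 psi T b -> ArcH mu a b -> 0 < L ->
  x0 = cos a + L * sin a -> y0 = sin a - L * cos a ->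
  L / vf mu a + Ff mu a b b <= T.
Proof.
  intros HS HA HL Hx0 Hy0.
  assert (Hm : 0 < mu < 1) by (destruct HA; auto).
  pose proof HA as HA'. destruct HA' as [_ [Ha [Hab [Hb [Hca Hcb]]]]].
  assert (Hsb : 0 < sin b) by (apply sin_gt_0; lra).
  assert (Hcb1 : -1 < cos b) by lra.
  pose proof (S_T _ _ _ _ _ _ HS) as HT0.
  destruct (traj0 mu x0 y0 psi) as [X0 Y0].
  assert (XT : traj_x mu x0 psi T = cos b) by (destruct HS as [_ [_ [R _]]]; exact R).
  assert (YT : traj_y mu y0 psi T = sin b) by (destruct HS as [_ [_ [_ R]]]; exact R).
  destruct (arc_pt mu a b a HA ltac:(lra)) as [Hca' [Hsa [Hwa [Hwa0 [Hva [_ Hsca]]]]]].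
  set (s0 := sin a) in *. set (c0 := cos a) in *. set (w0 := wf mu a) in *.
  assert (Hv0 : vf mu a = s0 + w0) by reflexivity.
  destruct (Req_dec a b) as [Eab|Nab].
  -
    subst b. rewrite Ff_a.
    destruct (S_chord mu x0 y0 psi T a 0 T HS) as [Hc _]; try lra.
    rewrite X0, Y0, XT, YT in Hc. fold c0 s0 in Hc.
    replace (c0 - x0 + (T - 0)) with (T - L*s0) in Hc by (rewrite Hx0; ring).
    replace (s0 - y0) with (L*c0) in Hc by (rewrite Hy0; ring).
    replace (T - 0) with T in Hc by ring.
    pose proof (quad_bound mu s0 c0 w0 L T Hm ltac:(lra) Hwa Hwa0 Hsa ltac:(lra) HT0 Hc).
    rewrite Hv0, Rplus_0_r.
    apply Rmult_le_reg_r with (s0 + w0); [lra|]. unfold Rdiv. rewrite Rmult_assoc, Rinv_l by lra. lra.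
  - assert (Hab' : a < b) by lra.
    apply le_epsilon. intros eps Heps.
    destruct (riemann mu a b HA Hab' eps Heps) as [N [HN Hri]].
    enough (Hmain : L / vf mu a + Ssum mu a b N <= T) by lra.
    set (d := dlt a b N).
    assert (HNpos : 0 < INR N) by (apply lt_0_INR; auto).
    assert (Hd : 0 < d) by (unfold d, dlt; apply Rdiv_lt_0_compat; lra).
    assert (HNd : INR N * d = b - a) by (unfold d, dlt; field; lra).
    set (g := fun i => 2 * sin (d / 2) / vf mu (mj a b N i)).
    assert (HSs : Ssum mu a b N = psum g N) by reflexivity.
    assert (Hphi : forall i, (i <= N)%nat -> a <= phj a b N i <= b).
    { intros i Hi. unfold phj. fold d. apply le_INR in Hi. pose proof (pos_INR i). split; nra. }
    assert (Hph0 : phj a b N 0 = a) by (unfold phj; simpl; ring).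
    assert (HphN : phj a b N N = b) by (unfold phj; fold d; lra).
    assert (Hmj : forall i, (i < N)%nat -> a < mj a b N i < b).
    { intros i Hi. unfold mj. fold d. assert (INR (S i) <= INR N) by (apply le_INR; lia).
      rewrite S_INR in H. pose proof (pos_INR i). split; nra. }
    assert (Hpm : forall i, phj a b N i = mj a b N i - d/2) by (intros; unfold phj, mj; fold d; field).
    assert (Hpm' : forall i, phj a b N (S i) = mj a b N i + d/2) by (intros; unfold phj, mj; rewrite S_INR; fold d; field).
    assert (Hcos_ord : forall i, (i <= N)%nat -> cos b <= cos (phj a b N i) <= x0).
    { intros i Hi. pose proof (Hphi i Hi).
      split; [apply cos_le_mono; lra|].
      apply Rle_trans with c0; [apply cos_le_mono; lra|]. rewrite Hx0. unfold c0. nra. }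
    assert (Inv : forall j, (j <= N)%nat -> exists t beta,
       0 <= t <= T /\ traj_x mu x0 psi t = cos (phj a b N j) /\
       ((j < N)%nat -> Bf mu (mj a b N j) <= beta) /\
       L / (s0 + w0) + psum g j + beta * (traj_y mu y0 psi t - sin (phj a b N j)) <= t).
    { induction j as [|j IH]; intros Hj.
      -
        destruct (S_cross mu x0 y0 psi T b c0 HS) as [t0 [Ht0 Hxt0]].
        { pose proof (Hcos_ord 0%nat ltac:(lia)) as Hc0. rewrite Hph0 in Hc0. exact Hc0. }
        assert (He0 : sin a <= traj_y mu y0 psi t0).
        { apply (S_ybound mu x0 y0 psi T b t0 a HS); auto. lra. }
        set (e0 := traj_y mu y0 psi t0 - s0).
        assert (He0' : 0 <= e0) by (unfold e0, s0; lra).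
        destruct (S_chord mu x0 y0 psi T b 0 t0 HS) as [Hc [_ [_ [_ Hsl]]]]; try lra.
        rewrite X0, Y0, Hxt0 in Hc, Hsl. replace (t0 - 0) with t0 in Hc by ring.
        assert (Edx : c0 - x0 = -(L*s0)) by (rewrite Hx0; unfold c0, s0; ring).
        assert (Edy : traj_y mu y0 psi t0 - y0 = e0 - 0 + L*c0) by (unfold e0; rewrite Hy0; unfold c0, s0; ring).
        destruct (Rlt_dec 0 w0) as [Hw0p|Hw0z].
        + pose proof (lin_bound mu s0 c0 w0 _ _ t0 ltac:(lra) ltac:(lra) Hwa Hwa0 ltac:(lra) Hc) as Hlin.
          pose proof (step_alg s0 c0 w0 L 0 e0 _ _ t0 ltac:(lra) Hw0p ltac:(lra) Edx Edy Hlin) as Hst.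
          exists t0, (c0 / w0). split; [lra|]. split; [rewrite Hph0; auto|]. split.
          * intros _. assert (Hm0 : a < mj a b N 0 < b) by (apply Hmj; lia).
            destruct (interior mu a b _ HA Hm0) as [Hcm Hwm].
            destruct (arc_pt mu a b (mj a b N 0) HA ltac:(lra)) as [_ [_ [Hwm2 _]]].
            unfold Bf. apply (B_mono mu); try lra; auto.
            unfold c0; apply cos_le_mono; lra.
            assert (c0 <> mu). { intros E. rewrite E in Hwa. nra. } lra.
          * simpl. rewrite Hph0. fold s0. fold e0. lra.
        + assert (Hw0 : w0 = 0) by lra.
          rewrite Hw0 in Hwa. 
          assert (Hcm : c0 = mu).
          { assert (c0 <> -mu).
            { intros E. pose proof (cos_strict a b ltac:(lra) Hab' ltac:(lra)). fold c0 in H. lra. }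
            nra. }
          assert (He00 : e0 = 0).
          { rewrite Edx, Edy in Hsl.
            assert (Hs2 : s0*s0 = 1 - mu*mu) by nra.
            assert (Hdy2 : (e0 + L*mu)*(e0 + L*mu) <= (mu*L)*(mu*L)).
            { replace (e0 - 0 + L * c0) with (e0 + L*mu) in Hsl by (rewrite Hcm; ring).
              apply Rmult_le_reg_l with (1 - mu*mu); [nra|].
              replace (mu * mu * (- (L * s0) * - (L * s0))) with ((1 - mu*mu)*((mu*L)*(mu*L))) in Hsl
                by (replace (- (L * s0) * - (L * s0)) with (L*L*(s0*s0)) by ring; rewrite Hs2; ring).
              lra. }
            assert (0 <= mu*L) by nra.
            assert (e0 + L*mu <= mu*L).
            { apply Rsqr_incr_0_var; unfold Rsqr; nra. }
            lra. }
          assert (Hc' : (t0 - L*s0)^2 + (L*c0)^2 <= (mu*t0)^2).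
          { replace (t0 - L*s0) with (c0 - x0 + t0) by lra.
            replace (L*c0) with (traj_y mu y0 psi t0 - y0) by lra. exact Hc. }
          pose proof (quad_bound mu s0 c0 0 L t0 Hm ltac:(lra) Hwa ltac:(lra) Hsa ltac:(lra) ltac:(lra) Hc') as Hq.
          exists t0, (Bf mu (mj a b N 0)). split; [lra|]. split; [rewrite Hph0; auto|]. split; [intros; lra|].
          simpl. rewrite Hph0. fold s0. fold e0. rewrite He00, Hw0.
          apply Rmult_le_reg_r with (s0 + 0); [lra|]. 
          replace ((L / (s0 + 0) + 0 + Bf mu (mj a b N 0) * 0) * (s0 + 0)) with L by (field; lra). lra.
      -
        destruct (IH ltac:(lia)) as [t [beta [Ht [Hxt [Hbeta Hineq]]]]].
        specialize (Hbeta ltac:(lia)).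
        destruct (S_cross mu x0 y0 psi T b (cos (phj a b N (S j))) HS) as [t' [Ht' Hxt']].
        { apply Hcos_ord; lia. }
        pose proof (Hphi j ltac:(lia)) as Hpj. pose proof (Hphi (S j) ltac:(lia)) as Hpj1.
        assert (Htt : t <= t').
        { apply (S_xmono mu x0 y0 psi T b t t' HS); try lra. rewrite Hxt, Hxt'.
          apply cos_le_mono; try lra. rewrite Hpm, Hpm'. lra. }
        assert (He : sin (phj a b N j) <= traj_y mu y0 psi t).
        { apply (S_ybound mu x0 y0 psi T b t _ HS); auto. lra. }
        assert (He' : sin (phj a b N (S j)) <= traj_y mu y0 psi t').
        { apply (S_ybound mu x0 y0 psi T b t' _ HS); auto. lra. }
        destruct (S_chord mu x0 y0 psi T b t t' HS) as [Hc _]; try lra.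
        set (m := mj a b N j) in *.
        assert (Hmi : a < m < b) by (apply Hmj; lia).
        destruct (interior mu a b m HA Hmi) as [Hcm Hwm].
        destruct (arc_pt mu a b m HA ltac:(lra)) as [_ [Hsm [Hwm2 [_ [_ [_ Hscm]]]]]].
        pose proof (lin_bound mu (sin m) (cos m) (wf mu m) _ _ (t' - t) ltac:(lra) Hscm Hwm2 ltac:(lra) ltac:(lra) Hc) as Hlin.
        destruct (chord_id m (d/2)) as [Ic Is].
        assert (Edx : traj_x mu x0 psi t' - traj_x mu x0 psi t = -(2 * sin (d/2) * sin m)).
        { rewrite Hxt, Hxt', Hpm', Hpm. fold m. rewrite <- Ic. reflexivity. }
        assert (Edy : traj_y mu y0 psi t' - traj_y mu y0 psi t =
           (traj_y mu y0 psi t' - sin (phj a b N (S j))) - (traj_y mu y0 psi t - sin (phj a b N j)) + 2 * sin (d/2) * cos m).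
        { rewrite Hpm', Hpm. fold m. rewrite <- Is. ring. }
        pose proof (step_alg _ _ _ _ _ _ _ _ _ Hscm Hwm ltac:(lra) Edx Edy Hlin) as Hst.
        exists t', (Bf mu m). split; [lra|]. split; [exact Hxt'|]. split.
        + intros HSj. assert (Hmi2 : a < mj a b N (S j) < b) by (apply Hmj; lia).
          destruct (interior mu a b _ HA Hmi2) as [Hcm2 Hwm2'].
          destruct (arc_pt mu a b (mj a b N (S j)) HA ltac:(lra)) as [_ [_ [Hwm22 _]]].
          unfold Bf. apply (B_mono mu); try lra; auto.
          apply cos_le_mono; try lra. unfold m, mj. rewrite S_INR. fold d. lra.
        + simpl. unfold g at 2. fold m.
          assert (Hvm : vf mu m = sin m + wf mu m) by reflexivity. rewrite Hvm.
          assert (beta * (traj_y mu y0 psi t - sin (phj a b N j)) >= Bf mu m * (traj_y mu y0 psi t - sin (phj a b N j))).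
          { apply Rle_ge, Rmult_le_compat_r; lra. }
          unfold Bf in *.
          set (Bm := cos m / wf mu m) in *.
          set (e := traj_y mu y0 psi t - sin (phj a b N j)) in *.
          set (e' := traj_y mu y0 psi t' - sin (phj a b N (S j))) in *.
          assert (Bm * (e' - e) = Bm * e' - Bm * e) by ring.
          lra. }
    destruct (Inv N (Nat.le_refl N)) as [t [beta [Ht [Hxt [_ Hineq]]]]].
    rewrite HphN in Hxt, Hineq.
    assert (Et : t = T).
    { apply Rle_antisym.
      - apply (S_xmono mu x0 y0 psi T b t T HS); try lra.
      - apply (S_xmono mu x0 y0 psi T b T t HS); try lra. }
    rewrite Et, YT in Hineq. rewrite HSs, Hv0. lra.
Qed.

Lemma der_shift (G : R -> R) t1 u d : is_derive G (u - t1) d -> is_derive (fun x => G (x - t1)) u d.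
Proof.
  intros HG.
  assert (D1 : is_derive (fun x : R => x - t1) u 1) by (auto_derive; auto; ring).
  pose proof (is_derive_comp G (fun x => x - t1) u d 1 HG D1) as K.
  assert (E : scal (V := R_NormedModule) 1 d = d) by (unfold scal; simpl; unfold mult; simpl; req; ring).
  rewrite E in K. exact K.
Qed.

Lemma der_cos (f : R -> R) u d : is_derive f u d -> is_derive (fun x => cos (f x)) u (-(d * sin (f u))).
Proof.
  intros Hf. pose proof (is_derive_comp cos f u (- sin (f u)) d (is_derive_cos (f u)) Hf) as K.
  replace (-(d * sin (f u))) with (scal d (- sin (f u))); [exact K|].
  unfold scal; simpl; unfold mult; simpl. req; ring.
Qed.

Lemma der_sin (f : R -> R) u d : is_derive f u d -> is_derive (fun x => sin (f x)) u (d * cos (f u)).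
Proof.
  intros Hf. pose proof (is_derive_comp sin f u (cos (f u)) d (is_derive_sin (f u)) Hf) as K.
  replace (d * cos (f u)) with (scal d (cos (f u))); auto.
Qed.

Definition angf mu p :=
  if Rle_dec 0 (vf mu p * cos p / mu) then acos ((1 - vf mu p * sin p) / mu)
  else - acos ((1 - vf mu p * sin p) / mu).

Lemma ang_ok mu a b p : ArcH mu a b -> a <= p <= b ->
  mu * cos (angf mu p) = 1 - vf mu p * sin p /\ mu * sin (angf mu p) = vf mu p * cos p.
Proof.
  intros HA Hp. assert (Hm : 0 < mu < 1) by (destruct HA; auto).
  destruct (arc_pt mu a b p HA Hp) as [Hc [Hs [Hw [Hw0 [Hv [Hv2 Hsc]]]]]].
  set (s := sin p) in *. set (c := cos p) in *. set (w := wf mu p) in *.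
  assert (Hvf : vf mu p = s + w) by reflexivity. rewrite Hvf.
  set (X := (1 - (s+w)*s)/mu). set (Y := (s+w)*c/mu).
  assert (Hab : (1 - (s+w)*s)*(1 - (s+w)*s) + ((s+w)*c)*((s+w)*c) = mu*mu).
  { assert (E0 : (1 - (s+w)*s)*(1 - (s+w)*s) + ((s+w)*c)*((s+w)*c) - mu*mu =
       ((s+w)*(s+w) - 1)*(s*s+c*c-1) + (w*w - (mu*mu - c*c))) by ring.
    rewrite Hsc, Hw in E0. lra. }
  assert (HXY : X*X + Y*Y = 1).
  { unfold X, Y.
    replace ((1 - (s + w) * s) / mu * ((1 - (s + w) * s) / mu) + (s + w) * c / mu * ((s + w) * c / mu))
      with (((1 - (s+w)*s)*(1 - (s+w)*s) + ((s+w)*c)*((s+w)*c))/(mu*mu)) by (field; lra).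
    rewrite Hab. field. lra. }
  assert (HX : -1 <= X <= 1) by nra.
  assert (Hsa : sin (acos X) = Rabs Y).
  { rewrite sin_acos by auto. apply sqrt_lem_1. unfold Rsqr; nra. apply Rabs_pos.
    unfold Rsqr. rewrite <- Rabs_mult. rewrite Rabs_pos_eq by nra. lra. }
  unfold angf. rewrite Hvf. fold s c w X. replace ((s + w) * c / mu) with Y by reflexivity.
  destruct (Rle_dec 0 Y) as [HY|HY].
  - rewrite cos_acos by auto. rewrite Hsa, Rabs_pos_eq by auto.
    unfold X, Y. split; field; lra.
  - rewrite cos_neg, sin_neg, cos_acos by auto. rewrite Hsa, Rabs_left by lra.
    unfold X, Y. split; field; lra.
Qed.

Lemma construct mu x0 y0 a b L : ArcH mu a b -> 0 < L ->
  x0 = cos a + L * sin a -> y0 = sin a - L * cos a ->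
  exists psi, admissible mu x0 y0 psi (L / vf mu a + Ff mu a b b) /\
    reaches mu x0 y0 psi (L / vf mu a + Ff mu a b b) b /\
    tangent_then_arc mu x0 y0 psi (L / vf mu a + Ff mu a b b) a b.
Proof.
  intros HA HL Hx0 Hy0.
  assert (Hm : 0 < mu < 1) by (destruct HA; auto).
  pose proof HA as HA'. destruct HA' as [_ [Ha [Hab [Hb [Hca Hcb]]]]].
  destruct (G_props mu a b HA) as [G [FG [GF [Gmono [Glip Gder]]]]].
  assert (G0 : G 0 = a) by (rewrite <- (Ff_a mu a b); apply GF).
  set (Tarc := Ff mu a b b).
  assert (HTarc : 0 <= Tarc).
  { pose proof (Ff_incr mu a b a b HA Hab). rewrite Ff_a in H. fold Tarc in H. lra. }
  assert (GT : G Tarc = b) by (apply GF).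
  destruct (arc_pt mu a b a HA ltac:(lra)) as [Hca' [Hsa [Hwa [Hwa0 [Hva [_ Hsca]]]]]].
  set (v0 := vf mu a) in *.
  set (t1 := L / v0).
  assert (Ht1 : 0 < t1) by (unfold t1; apply Rdiv_lt_0_compat; lra).
  assert (Ht1v : t1 * v0 = L) by (unfold t1; field; lra).
  set (Topt := t1 + Tarc).
  change (L / vf mu a + Ff mu a b b) with Topt.
  assert (Grange : forall s, 0 <= s <= Tarc -> a <= G s <= b).
  { intros s Hs. rewrite <- G0, <- GT. split; apply Gmono; lra. }
  set (Phi := fun t => G (Rmax 0 (t - t1))).
  assert (Phi_range : forall t, 0 <= t <= Topt -> a <= Phi t <= b).
  { intros t Ht. unfold Phi. apply Grange. unfold Rmax; destruct Rle_dec; unfold Topt in Ht; lra. }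
  assert (Phi_seg : forall t, t <= t1 -> Phi t = a).
  { intros t Ht. unfold Phi. rewrite Rmax_left by lra. exact G0. }
  assert (Phi_arc : forall t, t1 <= t -> Phi t = G (t - t1)).
  { intros t Ht. unfold Phi. rewrite Rmax_right by lra. reflexivity. }
  set (psi := fun t => angf mu (Phi t)).
  exists psi.
  set (fx := fun s => mu * cos (psi s) - 1).
  set (fy := fun s => mu * sin (psi s)).
  assert (Hf : forall t, 0 <= t <= Topt -> fx t = -(vf mu (Phi t) * sin (Phi t)) /\ fy t = vf mu (Phi t) * cos (Phi t)).
  { intros t Ht. destruct (ang_ok mu a b (Phi t) HA (Phi_range t Ht)) as [E1 E2].
    unfold fx, fy, psi. split; lra. }
  assert (Seg : forall t, 0 <= t <= t1 -> ex_RInt fx 0 t /\ ex_RInt fy 0 t /\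
     RInt fx 0 t = t * (-(v0 * sin a)) /\ RInt fy 0 t = t * (v0 * cos a)).
  { intros t Ht.
    assert (Ex : forall x, Rmin 0 t < x < Rmax 0 t -> (fun _ => -(v0 * sin a)) x = fx x).
    { intros x Hx. rewrite Rmin_left, Rmax_right in Hx by lra.
      destruct (Hf x ltac:(unfold Topt; lra)) as [E _]. rewrite E, Phi_seg by lra. reflexivity. }
    assert (Ey : forall x, Rmin 0 t < x < Rmax 0 t -> (fun _ => v0 * cos a) x = fy x).
    { intros x Hx. rewrite Rmin_left, Rmax_right in Hx by lra.
      destruct (Hf x ltac:(unfold Topt; lra)) as [_ E]. rewrite E, Phi_seg by lra. reflexivity. }
    split; [apply (exR_ext _ _ _ _ Ex); apply exR_const|].
    split; [apply (exR_ext _ _ _ _ Ey); apply exR_const|].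
    split.
    - rewrite <- (R_ext _ _ _ _ Ex). rewrite R_const. req; ring.
    - rewrite <- (R_ext _ _ _ _ Ey). rewrite R_const. req; ring. }
  set (Gs := fun u => G (u - t1)).
  assert (Gs_cont : forall u, continuous Gs u).
  { intros u. apply (lip_cont' Gs 2); [lra|]. intros x y. unfold Gs.
    replace (x - y) with ((x - t1) - (y - t1)) by ring. apply Glip. }
  assert (Gs_der : forall u, is_derive Gs u (vh mu a b (Gs u))).
  { intros u. unfold Gs. apply der_shift. apply Gder. }
  assert (vhG_cont : forall u, continuous (fun u => vh mu a b (Gs u)) u).
  { intros u. apply (continuous_comp Gs (vh mu a b)). apply Gs_cont.
    unfold vh. apply (continuous_comp (clamp a b) (vf mu)). apply clamp_cont; lra. apply vf_cont. }
  set (dX := fun u => -(vh mu a b (Gs u) * sin (Gs u))).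
  set (dY := fun u => vh mu a b (Gs u) * cos (Gs u)).
  assert (dX_cont : forall u, continuous dX u).
  { intros u. unfold dX.
    assert (C : continuous (fun u => vh mu a b (Gs u) * sin (Gs u)) u).
    { apply (continuous_mult (K:=R_AbsRing) (fun u => vh mu a b (Gs u)) (fun u => sin (Gs u))).
      apply vhG_cont. apply (continuous_comp Gs sin). apply Gs_cont. apply continuous_sin. }
    exact (continuous_opp (V:=R_NormedModule) _ _ C). }
  assert (dY_cont : forall u, continuous dY u).
  { intros u. unfold dY.
    apply (continuous_mult (K:=R_AbsRing) (fun u => vh mu a b (Gs u)) (fun u => cos (Gs u))). apply vhG_cont. apply (continuous_comp Gs cos). apply Gs_cont. apply continuous_cos. }
  assert (Arc : forall t, t1 <= t <= Topt -> ex_RInt fx t1 t /\ ex_RInt fy t1 t /\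
     RInt fx t1 t = cos (Gs t) - cos a /\ RInt fy t1 t = sin (Gs t) - sin a).
  { intros t Ht.
    assert (IX : is_RInt dX t1 t (cos (Gs t) - cos (Gs t1))).
    { apply (R_derive (fun u => cos (Gs u))).
      - intros; unfold dX. apply der_cos. apply Gs_der.
      - intros; apply dX_cont. }
    assert (IY : is_RInt dY t1 t (sin (Gs t) - sin (Gs t1))).
    { apply (R_derive (fun u => sin (Gs u))).
      - intros; unfold dY. apply der_sin. apply Gs_der.
      - intros; apply dY_cont. }
    assert (Gt1 : Gs t1 = a) by (unfold Gs; replace (t1 - t1) with 0 by ring; exact G0).
    rewrite Gt1 in IX, IY.
    assert (Evh : forall x, t1 <= x <= Topt -> vh mu a b (Gs x) = vf mu (Phi x)).
    { intros x Hx. assert (E : Gs x = Phi x) by (rewrite Phi_arc by lra; reflexivity).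
      unfold vh. rewrite E, clamp_id; [reflexivity|]. apply Phi_range. unfold Topt in *; lra. }
    assert (Ex : forall x, Rmin t1 t < x < Rmax t1 t -> dX x = fx x).
    { intros x Hx. rewrite Rmin_left, Rmax_right in Hx by lra.
      destruct (Hf x ltac:(unfold Topt in *; lra)) as [E _]. rewrite E. unfold dX.
      rewrite Evh by lra. rewrite Phi_arc by lra. reflexivity. }
    assert (Ey : forall x, Rmin t1 t < x < Rmax t1 t -> dY x = fy x).
    { intros x Hx. rewrite Rmin_left, Rmax_right in Hx by lra.
      destruct (Hf x ltac:(unfold Topt in *; lra)) as [_ E]. rewrite E. unfold dY.
      rewrite Evh by lra. rewrite Phi_arc by lra. reflexivity. }
    split; [apply (exR_ext _ _ _ _ Ex); apply (exR_is _ _ _ _ IX)|].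
    split; [apply (exR_ext _ _ _ _ Ey); apply (exR_is _ _ _ _ IY)|].
    split.
    - rewrite <- (R_ext _ _ _ _ Ex). apply R_unique; exact IX.
    - rewrite <- (R_ext _ _ _ _ Ey). apply R_unique; exact IY. }
  assert (TrSeg : forall t, 0 <= t <= t1 ->
     traj_x mu x0 psi t = x0 - t * (v0 * sin a) /\ traj_y mu y0 psi t = y0 + t * (v0 * cos a)).
  { intros t Ht. destruct (Seg t Ht) as [_ [_ [E1 E2]]]. unfold traj_x, traj_y. fold fx fy.
    rewrite E1, E2. split; ring. }
  assert (TrArc : forall t, t1 <= t <= Topt ->
     traj_x mu x0 psi t = cos (Gs t) /\ traj_y mu y0 psi t = sin (Gs t)).
  { intros t Ht. destruct (Seg t1 ltac:(lra)) as [Sx [Sy [E1 E2]]].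
    destruct (Arc t Ht) as [Ax [Ay [E3 E4]]].
    unfold traj_x, traj_y. fold fx fy.
    rewrite (R_split fx 0 t1 t) by (split; [lra|lra] || idtac; apply (exCh _ _ t1); auto).
    rewrite (R_split fy 0 t1 t) by (split; [lra|lra] || idtac; apply (exCh _ _ t1); auto).
    rewrite E1, E2, E3, E4.
    replace (t1 * - (v0 * sin a)) with (-(L * sin a)) by (rewrite <- Ht1v; ring).
    replace (t1 * (v0 * cos a)) with (L * cos a) by (rewrite <- Ht1v; ring).
    rewrite Hx0, Hy0. split; ring. }
  split; [|split].
  -
    split; [unfold Topt; lra|].
    destruct (Seg t1 ltac:(lra)) as [Sx [Sy _]].
    destruct (Arc Topt ltac:(unfold Topt; lra)) as [Ax [Ay _]].
    split; [apply (exCh _ _ t1); auto|].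
    split; [apply (exCh _ _ t1); auto|].
    intros t Ht. unfold rnorm. rewrite <- sqrt_1. apply sqrt_le_1_alt.
    destruct (Rle_dec t t1) as [Hle|Hgt].
    + destruct (TrSeg t ltac:(lra)) as [E1 E2]. rewrite E1, E2, Hx0, Hy0.
      replace ((cos a + L * sin a - t * (v0 * sin a)) ^ 2 + (sin a - L * cos a + t * (v0 * cos a)) ^ 2)
        with ((sin a * sin a + cos a * cos a) * (1 + (L - t*v0)^2)) by ring.
      rewrite Hsca. pose proof (pow2_ge_0 (L - t*v0)). lra.
    + destruct (TrArc t ltac:(lra)) as [E1 E2]. rewrite E1, E2.
      pose proof (sin2_cos2 (Gs t)). unfold Rsqr in H. nra.
  -
    destruct (TrArc Topt ltac:(unfold Topt; lra)) as [E1 E2].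
    unfold reaches. rewrite E1, E2. unfold Gs, Topt. replace (t1 + Tarc - t1) with Tarc by ring.
    rewrite GT. split; reflexivity.
  -
    exists t1. split; [unfold Topt; lra|].
    split.
    { intros t Ht. exists (t / t1). split.
      - split; [apply Rmult_le_pos; [lra| left; apply Rinv_0_lt_compat; lra]|].
        apply Rmult_le_reg_r with t1; [lra|]. unfold Rdiv. rewrite Rmult_assoc, Rinv_l by lra. lra.
      - destruct (TrSeg t Ht) as [E1 E2]. rewrite E1, E2.
        replace (cos a - x0) with (-(L * sin a)) by (rewrite Hx0; ring).
        replace (sin a - y0) with (L * cos a) by (rewrite Hy0; ring).
        rewrite <- Ht1v. split; field; lra. }
    destruct (TrArc t1 ltac:(unfold Topt; lra)) as [E1 E2].
    assert (Gt1 : Gs t1 = a) by (unfold Gs; replace (t1 - t1) with 0 by ring; exact G0).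
    rewrite Gt1 in E1, E2.
    split; [exact E1|]. split; [exact E2|].
    exists Gs. split; [exact Gt1|]. split.
    + unfold Gs, Topt. replace (t1 + Tarc - t1) with Tarc by ring. exact GT.
    + split.
      * intros t u H1 H2 H3. unfold Gs. apply Gmono. lra.
      * intros t Ht. apply TrArc. exact Ht.
Qed.

Theorem theorem1 (mu x0 y0 theta : R) :
  0 < mu < 1 ->
  1 < rnorm x0 y0 ->
  0 <= y0 ->
  theta_tan x0 y0 <= theta <= PI ->
  (* the target is reachable by some constraint-respecting trajectory *)
  (exists psi T, admissible mu x0 y0 psi T /\ reaches mu x0 y0 psi T theta) ->
  exists psi_opt T_opt,
    admissible mu x0 y0 psi_opt T_opt /\
    reaches mu x0 y0 psi_opt T_opt theta /\
    tangent_then_arc mu x0 y0 psi_opt T_opt (theta_tan x0 y0) theta /\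
    (forall psi T, admissible mu x0 y0 psi T -> reaches mu x0 y0 psi T theta ->
       T_opt <= T).
Proof.
  intros Hm Hr Hy Hth [psi [T [Had Hre]]].
  destruct (tan_geom x0 y0 Hr Hy) as [Ha [HL [Hx0 Hy0]]].
  set (a := theta_tan x0 y0) in *. set (L := sqrt (rnorm x0 y0 ^ 2 - 1)) in *.
  assert (HS : Setup mu x0 y0 psi T theta) by (split; auto).
  pose proof (S_final mu x0 y0 psi T theta HS Hr) as Hcb.
  assert (Hb : theta < PI).
  { destruct (Req_dec theta PI) as [E|N]; [|lra]. rewrite E, cos_PI in Hcb. lra. }
  assert (Hsb : 0 < sin theta) by (apply sin_gt_0; lra).
  assert (Hsa : 0 < sin a) by (apply sin_gt_0; lra).
  assert (Hca : cos a <= mu).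
  { destruct (S_cross mu x0 y0 psi T theta (cos a) HS) as [t [Ht Hxt]].
    { split. apply cos_le_mono; lra. rewrite Hx0. nra. }
    assert (Hyt : sin a <= traj_y mu y0 psi t).
    { apply (S_ybound mu x0 y0 psi T theta t a HS); auto; lra. }
    destruct (S_chord mu x0 y0 psi T theta 0 t HS) as [_ [_ [_ [_ Hsl]]]]; try lra.
    destruct (traj0 mu x0 y0 psi) as [X0 Y0]. rewrite X0, Y0, Hxt in Hsl.
    replace (cos a - x0) with (-(L * sin a)) in Hsl by (rewrite Hx0; ring).
    destruct (Rle_dec (cos a) 0) as [Hc|Hc]; [lra|].
    set (dy := traj_y mu y0 psi t - y0) in *.
    assert (Hdy : L * cos a <= dy) by (unfold dy; lra).
    assert (Hdy2 : (L * cos a) * (L * cos a) <= dy * dy) by (apply Rmult_le_compat; nra).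
    pose proof (sin2_cos2 a) as Hsc. unfold Rsqr in Hsc.
    assert (Hk : (1 - mu*mu) * ((L*cos a)*(L*cos a)) <= mu*mu*((L*sin a)*(L*sin a))).
    { apply Rle_trans with ((1 - mu*mu) * (dy*dy)). apply Rmult_le_compat_l; nra.
      replace ((L*sin a)*(L*sin a)) with (- (L * sin a) * - (L * sin a)) by ring. exact Hsl. }
    assert (HL2 : 0 < L*L) by nra.
    assert (Hk2 : (1 - mu*mu) * (cos a * cos a) <= mu*mu*(sin a * sin a)).
    { apply Rmult_le_reg_r with (L*L); [exact HL2|]. 
      replace ((1 - mu*mu) * (cos a * cos a) * (L*L)) with ((1 - mu*mu) * ((L*cos a)*(L*cos a))) by ring.
      replace (mu*mu*(sin a * sin a) * (L*L)) with (mu*mu*((L*sin a)*(L*sin a))) by ring. exact Hk. }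
    assert (cos a * cos a <= mu * mu) by nra.
    destruct (Rle_lt_dec (cos a) mu) as [h|h]; auto. nra. }
  assert (HA : ArcH mu a theta) by (repeat split; lra).
  destruct (construct mu x0 y0 a theta L HA HL Hx0 Hy0) as [psi0 [Ad [Re Sh]]].
  exists psi0, (L / vf mu a + Ff mu a theta theta).
  split; [exact Ad|]. split; [exact Re|]. split; [exact Sh|].
  intros psi' T' Had' Hre'.
  apply (lower_bound mu x0 y0 psi' T' a theta L); auto.
  split; auto.
Qed.
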